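(* Let $n,c\ge 1$ and let $\mathcal A$ be a deterministic automaton over $\Sigma_n^c$ whose acceptance of a run depends only on the set of transitions occurring infinitely often (e.g. a deterministic Rabin, Streett or parity automaton), and assume $\mathcal A$ recognises $L(\mathcal P_n^c)$ or its complement. If words $u,v\in(\Sigma_n^c)^*$ both lead from the initial state $s_0$ of $\mathcal A$ to the same state $s$, then $\mathrm{reach}(u)=\mathrm{reach}(v)$, or $\top\in\mathrm{reach}(u)$ and $\top\in\mathrm{reach}(v)$.
   Context: Full parity automaton $\mathcal P_n^c$: state set $Q$ with $|Q|=n$, plus a special accepting sink $\top\notin Q$ (all transitions from $\top$ lead to $\top$, and any run visiting $\top$ is accepting); $Q^\top=Q\cup\{\top\}$. Alphabet $\Sigma_n^c$ is the set of functions $\sigma:Q\times Q^\top\to 2^{\{1,\dots,c\}}$. Initial states $I=Q$; transitions $(q,\sigma,q')$ with $q\in Q$, $q'\in Q^\top$ and $\sigma(q,q')\neq\emptyset$; the priority of $(q,\sigma,q')$ with $q'\in Q$ is the largest even number in $\sigma(q,q')$ if there is one, and otherwise the smallest (odd) number in $\sigma(q,q')$. A run not visiting $\top$ is accepting iff the largest priority occurring infinitely often is even; a word is accepted iff some run accepts it. $\mathrm{reach}(u)\subseteq Q^\top$ is defined by $\mathrm{reach}(\varepsilon)=Q$ and $\mathrm{reach}(w\sigma)=\{q'\in Q^\top\mid\exists q\in\mathrm{reach}(w).\ (q,\sigma,q')\text{ is a transition}\}$ (with $\top$ always having successor $\top$). *)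

(* Defs.v *)
From mathcomp Require Import all_boot.
Set Implicit Arguments. Unset Strict Implicit. Unset Printing Implicit Defensive.

(* States Q = 'I_n; Q^T = option 'I_n, with None playing the role of the sink T.
   Priorities {1,..,c} are represented by 'I_c, the element i standing for i+1. *)
Definition Qtop (n : nat) := option 'I_n.

Definition Sigma (n c : nat) := {ffun 'I_n * option 'I_n -> {set 'I_c}}.

Definition pval (c : nat) (i : 'I_c) : nat := (val i).+1.

Definition ptrans (n c : nat) (q : option 'I_n) (s : Sigma n c) (q' : option 'I_n) : bool :=
  match q with
  | None => q' == None
  | Some p => s (p, q') != set0
  end.

Definition prio (n c : nat) (q : 'I_n) (s : Sigma n c) (q' : 'I_n) : nat :=
  let P := s (q, Some q') in
  if [exists i in P, ~~ odd (pval i)]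
  then \max_(i in P | ~~ odd (pval i)) pval i
  else \big[minn/c.+1]_(i in P) pval i.

Definition inf_often (P : nat -> Prop) : Prop := forall N, exists i, N <= i /\ P i.

Definition prun (n c : nat) (w : nat -> Sigma n c) (r : nat -> option 'I_n) : Prop :=
  r 0 != None /\ forall i, ptrans (r i) (w i) (r i.+1).

Definition prio_at (n c : nat) (w : nat -> Sigma n c) (r : nat -> option 'I_n) (i : nat)
  (p : nat) : Prop :=
  exists q q', r i = Some q /\ r i.+1 = Some q' /\ prio q (w i) q' = p.

Definition prun_accepting (n c : nat) (w : nat -> Sigma n c) (r : nat -> option 'I_n) : Prop :=
  (exists i, r i = None) \/
  (exists p, ~~ odd p /\ inf_often (fun i => prio_at w r i p) /\
     forall p', inf_often (fun i => prio_at w r i p') -> p' <= p).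

Definition P_accepts (n c : nat) (w : nat -> Sigma n c) : Prop :=
  exists r, prun w r /\ prun_accepting w r.

Definition reach_step (n c : nat) (X : {set option 'I_n}) (s : Sigma n c) : {set option 'I_n} :=
  [set q' | [exists q in X, ptrans q s q']].

Definition reach (n c : nat) (u : seq (Sigma n c)) : {set option 'I_n} :=
  foldl (@reach_step n c) [set q | q != None] u.

Definition drun (S A : Type) (s0 : S) (delta : S -> A -> S) (w : nat -> A) : nat -> S :=
  fix r i := match i with 0 => s0 | i'.+1 => delta (r i') (w i') end.

Definition D_accepts (S A : finType) (s0 : S) (delta : S -> A -> S)
  (Acc : {set S * A * S} -> bool) (w : nat -> A) : Prop :=
  exists X : {set S * A * S},
    (forall t, t \in X <->
       inf_often (fun i => (drun s0 delta w i, w i, drun s0 delta w i.+1) = t)) /\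
    Acc X.

(* Main.v *)
Require Import Defs.
From mathcomp Require Import all_boot.
From mathcomp Require Import zify.
Set Implicit Arguments. Unset Strict Implicit. Unset Printing Implicit Defensive.

Definition catw (A : Type) (u : seq A) (w : nat -> A) (i : nat) : A :=
  if i < size u then nth (w 0) u i else w (i - size u).

Lemma inf_often_ext (P Q : nat -> Prop) :
  (forall i, P i <-> Q i) -> (inf_often P <-> inf_often Q).
Proof.
move=> H; split=> h N; have [i [hi Pi]] := h N; exists i; split=> //; exact/H.
Qed.

Lemma inf_often_shift (P : nat -> Prop) m :
  inf_often P <-> inf_often (fun k => P (m + k)).
Proof.
split=> h N.
- have [i [hi Pi]] := h (m + N); exists (i - m); split; first lia.
  by have -> : m + (i - m) = i by lia.
- have [k [hk Pk]] := h N; exists (m + k); split=> //; lia.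
Qed.

Lemma drunS (S A : Type) (s0 : S) (delta : S -> A -> S) w i :
  drun s0 delta w i.+1 = delta (drun s0 delta w i) (w i).
Proof. by []. Qed.

Lemma drun_pre (S A : Type) (s0 : S) (delta : S -> A -> S) u w i :
  i <= size u -> drun s0 delta (catw u w) i = foldl delta s0 (take i u).
Proof.
elim: i => [|i IH] hi; first by rewrite take0.
rewrite drunS IH; last lia.
rewrite (take_nth (w 0)); last lia.
by rewrite foldl_rcons /catw ifT //.
Qed.

Lemma drun_post (S A : Type) (s0 : S) (delta : S -> A -> S) u w k :
  drun s0 delta (catw u w) (size u + k) = drun (foldl delta s0 u) delta w k.
Proof.
elim: k => [|k IH].
  by rewrite addn0 drun_pre // take_size.
rewrite addnS !drunS IH /catw ifF; last lia.
by have -> : size u + k - size u = k by lia.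
Qed.

Lemma D_shift (S A : finType) (s0 : S) (delta : S -> A -> S) Acc u v w :
  foldl delta s0 u = foldl delta s0 v ->
  (D_accepts s0 delta Acc (catw u w) <-> D_accepts s0 delta Acc (catw v w)).
Proof.
move=> hs.
have key : forall u t, inf_often (fun i => (drun s0 delta (catw u w) i, catw u w i,
      drun s0 delta (catw u w) i.+1) = t) <->
    inf_often (fun k => (drun (foldl delta s0 u) delta w k, w k,
      drun (foldl delta s0 u) delta w k.+1) = t).
  move=> u' t; rewrite (inf_often_shift _ (size u')); apply: inf_often_ext => k.
  rewrite -addnS !drun_post /catw ifF; last lia.
  by have -> : size u' + k - size u' = k by lia.
split=> [[X [HX HA]]|[X [HX HA]]]; exists X; split=> // t.
- by rewrite HX key hs -key.
- by rewrite HX key -hs -key.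
Qed.

Section R.
Variables n c : nat.

Lemma reach_ex (X : {set option 'I_n}) (u : seq (Sigma n c)) x d :
  x \in foldl (@reach_step n c) X u ->
  exists r : nat -> option 'I_n, r 0 \in X /\
    (forall i, i < size u -> ptrans (r i) (nth d u i) (r i.+1)) /\ r (size u) = x.
Proof.
elim: u X => [|s u IH] X /=.
  by move=> hx; exists (fun _ => x).
move=> /IH [r [r0 [tr rx]]].
move: r0; rewrite inE => /existsP [q /andP [qX tq]].
exists (fun i => if i is i'.+1 then r i' else q); split=> //; split=> // [[|i]] hi //=.
apply: tr; lia.
Qed.

Lemma reach_in (X : {set option 'I_n}) (u : seq (Sigma n c)) d (r : nat -> option 'I_n) :
  r 0 \in X -> (forall i, i < size u -> ptrans (r i) (nth d u i) (r i.+1)) ->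
  r (size u) \in foldl (@reach_step n c) X u.
Proof.
elim: u X r => [|s u IH] X r //= r0 tr.
apply: (IH _ (fun i => r i.+1)) => [|i hi]; last by apply: (tr i.+1).
rewrite inE; apply/existsP; exists (r 0); rewrite r0 /=; exact: (tr 0).
Qed.
End R.

Lemma keyK (n c : nat) (hc : 1 <= c)
  (S : finType) (s0 : S) (delta : S -> Sigma n c -> S)
  (Acc : {set S * Sigma n c * S} -> bool) :
  ((forall w, D_accepts s0 delta Acc w <-> P_accepts w) \/
   (forall w, D_accepts s0 delta Acc w <-> ~ P_accepts w)) ->
  forall (u v : seq (Sigma n c)) x,
    foldl delta s0 u = foldl delta s0 v ->
    x \in reach u -> x \notin reach v -> None \notin reach v -> False.
Proof.
move=> H u v x hs hxu hxv hNv.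
pose sg : Sigma n c := [ffun pq : 'I_n * option 'I_n =>
  if (Some pq.1 == x) && (pq.2 == None) then [set: 'I_c] else set0].
pose w := fun _ : nat => sg.
have setT0 : [set: 'I_c] != set0 by apply/set0Pn; exists (Ordinal hc).
have C1 : P_accepts (catw u w).
  have [r [r0 [tr rx]]] := reach_ex sg hxu.
  exists (fun i => if i <= size u then r i else None); split.
    split; first by move: r0; rewrite leq0n inE.
    move=> i; case: (ltngtP i (size u)) => hi.
    - rewrite /catw hi; exact: tr.
    - by [].
    - rewrite hi rx /catw ltnn.
      rewrite subnn /w; case E: x => [q|] //=.
      by rewrite /sg ffunE /= -E eqxx.
  by left; exists (size u).+1; rewrite ltnn.
have C2 : ~ P_accepts (catw v w).
  move=> [r [[r0 tr] _]].
  have hr : r (size v) \in reach v.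
    apply: (reach_in (d:=sg)); first by rewrite inE.
    move=> i hi; move: (tr i). by rewrite /catw hi.
  move: (tr (size v)); rewrite /catw ltnn subnn /w /=.
  case E: (r (size v)) => [p|]; last by rewrite -E hr in hNv.
  rewrite /= ffunE /=.
  have -> : (Some p == x) = false by apply/negbTE; apply: contraNneq hxv => <-; rewrite -E.
  by rewrite eqxx.
have C3 := D_shift Acc w hs.
case: H => H.
- by apply: C2; apply/H/C3/H.
- by apply: (proj1 (H _) (proj2 C3 (proj2 (H _) C2))).
Qed.

Theorem mainTheorem6 (n c : nat) (hn : 1 <= n) (hc : 1 <= c)
  (S : finType) (s0 : S) (delta : S -> Sigma n c -> S)
  (Acc : {set S * Sigma n c * S} -> bool) :
  ((forall w, D_accepts s0 delta Acc w <-> P_accepts w) \/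
   (forall w, D_accepts s0 delta Acc w <-> ~ P_accepts w)) ->
  forall u v : seq (Sigma n c),
    foldl delta s0 u = foldl delta s0 v ->
    reach u = reach v \/ (None \in reach u /\ None \in reach v).
Proof.
move=> H u v hs.
have K := keyK hc H.
case: (boolP ((None \in reach u) && (None \in reach v))) => [/andP[a b]|hN]; first by right.
left; apply/setP => x; apply/idP/idP => hx; apply/negPn/negP => hx'.
- case: (boolP (None \in reach v)) => hv.
  + have hu : None \notin reach u by move: hN; rewrite hv andbT.
    exact: (K v u None (esym hs) hv hu hu).
  + exact: (K u v x hs hx hx' hv).
- case: (boolP (None \in reach u)) => hu.
  + have hv : None \notin reach v by move: hN; rewrite hu.
    exact: (K u v None hs hu hv hv).
  + exact: (K v u x (esym hs) hx hx' hu).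
Qed.
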